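(* Let $D$ be a Dedekind domain with quotient field $K$, let $I$ be a finite non-empty index set, let $f_i\in D[x]$ be irreducible in $K[x]$ for each $i\in I$, and let $c$ be a non-unit of $D$ with $\mathsf{d}\bigl(\prod_{i\in I}f_i\bigr)=cD$. Put $f=\frac{1}{c}\prod_{i\in I}f_i\in\operatorname{Int}(D)$, and let $\mathcal{P}$ be the finite set of maximal ideals of $D$ containing $c$. Suppose that for each $P\in\mathcal{P}$, $\Lambda_P\subseteq I$ is a subset such that $f_i$ is indispensable for $P$ (among the polynomials $f_i$, $i\in I$) for every $i\in\Lambda_P$, and let $\Lambda=\bigcup_{P\in\mathcal{P}}\Lambda_P$. If $\bigcap_{P\in\mathcal{P}}\Lambda_P\neq\emptyset$, then all essentially different factorizations of $f$ into irreducibles in $\operatorname{Int}(D)$ are given by \[\frac{\prod_{i\in\Lambda\cup J_1}f_i}{c}\cdot\prod_{j\in J_2}f_j\] (each $f_j$, $j\in J_2$, counted as an individual factor), where $I=\Lambda\uplus J_1\uplus J_2$ and $J_1$ is minimal (with respect to inclusion) such that $\mathsf{d}\bigl(\prod_{i\in\Lambda\cup J_1}f_i\bigr)=cD$. That is, each such expression is a factorization of $f$ into irreducibles of $\operatorname{Int}(D)$, and every factorization of $f$ into irreducibles of $\operatorname{Int}(D)$ is essentially the same as one of them.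
   Context: $\operatorname{Int}(D)=\{h\in K[x]\mid h(D)\subseteq D\}$. For $g\in D[x]$, the fixed divisor $\mathsf{d}(g)$ is the ideal of $D$ generated by $\{g(a)\mid a\in D\}$. For a maximal ideal $P$, $\mathsf{v}_P$ is the $P$-adic valuation. Given polynomials $f_i\in D[x]$, $i\in I$, and a maximal ideal $P$, $f_k$ is called indispensable for $P$ (among the $f_i$, $i\in I$) if there exists $z\in D$ with $\mathsf{v}_P(f_k(z))>0$ and $\mathsf{v}_P(f_i(z))=0$ for all $i\neq k$. A factorization is a product of irreducible elements (non-zero non-units not expressible as a product of two non-units); two factorizations are essentially the same if they have the same number of factors and, after reindexing, corresponding factors differ by unit factors of $\operatorname{Int}(D)$. *)

(* Defs.v *)
From HB Require Import structures.
From mathcomp Require Import all_boot all_order all_algebra.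
From mathcomp Require Import fraction.
Set Implicit Arguments. Unset Strict Implicit. Unset Printing Implicit Defensive.
Import Order.TTheory GRing.Theory Num.Theory.
Local Open Scope ring_scope.

Section Defs.
Variable R : idomainType.
Local Notation K := {fraction R}.
Local Notation "x %:F" := (@tofrac R x).

Definition is_ideal (I : R -> Prop) : Prop :=
  [/\ I 0, (forall x y, I x -> I y -> I (x + y)) & (forall r x, I x -> I (r * x))].

Definition ideal_gen (S : R -> Prop) : R -> Prop := fun x =>
  exists s : seq (R * R), (forall p, p \in s -> S p.2) /\ x = \sum_(p <- s) p.1 * p.2.

Definition principal (c : R) : R -> Prop := fun x => exists r, x = r * c.

Definition prime_ideal (P : R -> Prop) : Prop :=
  [/\ is_ideal P, ~ P 1 & forall x y, P (x * y) -> P x \/ P y].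

Definition maximal_ideal (P : R -> Prop) : Prop :=
  [/\ is_ideal P, ~ P 1 &
     forall Q, is_ideal Q -> (forall x, P x -> Q x) -> Q 1 \/ (forall x, Q x -> P x)].

Definition noetherian_dom : Prop :=
  forall I, is_ideal I -> exists s : seq R, forall x, I x <-> ideal_gen (fun y => y \in s) x.

Definition integrally_closed_dom : Prop :=
  forall x : K, (exists p : {poly R}, p \is monic /\ root (map_poly (@tofrac R) p) x) ->
    exists a : R, x = a%:F.

Definition dim_le1 : Prop :=
  forall P, prime_ideal P -> (exists x, P x /\ x != 0) -> maximal_ideal P.

Definition dedekind_domain : Prop :=
  [/\ noetherian_dom, integrally_closed_dom & dim_le1].

Definition fixed_divisor (g : {poly R}) : R -> Prop :=
  ideal_gen (fun y => exists a, y = g.[a]).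

Definition fixdiv_is (g : {poly R}) (c : R) : Prop :=
  forall x, fixed_divisor g x <-> principal c x.

(* v_P(a) > 0  <->  a \in P  ;  v_P(a) = 0  <->  a \notin P *)
Definition vP_pos (P : R -> Prop) (a : R) : Prop := P a.
Definition vP_zero (P : R -> Prop) (a : R) : Prop := ~ P a.

Definition indispensable (I : finType) (f : I -> {poly R}) (P : R -> Prop) (k : I) : Prop :=
  exists z : R, vP_pos P (f k).[z] /\ forall i, i != k -> vP_zero P (f i).[z].

Definition intval (h : {poly K}) : Prop := forall a : R, exists b : R, h.[a%:F] = b%:F.

Definition Int_unit (h : {poly K}) : Prop :=
  intval h /\ exists g, intval g /\ h * g = 1.

Definition Int_irred (h : {poly K}) : Prop :=
  [/\ intval h, h != 0, ~ Int_unit h &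
     forall g1 g2, intval g1 -> intval g2 -> h = g1 * g2 -> Int_unit g1 \/ Int_unit g2].

Definition Int_factorization (f : {poly K}) (s : seq {poly K}) : Prop :=
  (forall h, h \in s -> Int_irred h) /\ \prod_(h <- s) h = f.

Definition Int_assoc (a b : {poly K}) : Prop := exists u, Int_unit u /\ a = u * b.

Definition ess_same (s t : seq {poly K}) : Prop :=
  size s = size t /\
  exists t', perm_eq t t' /\ forall i, (i < size s)%N -> Int_assoc (nth 0 s i) (nth 0 t' i).

End Defs.

(* Main.v *)
Require Import Defs.
From HB Require Import structures.
From mathcomp Require Import all_boot all_order all_algebra.
From mathcomp Require Import fraction.
From mathcomp Require Import ring.
From Stdlib Require Import Classical ClassicalEpsilon.
Import GRing.Theory.
Local Open Scope ring_scope.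
Set Implicit Arguments. Unset Strict Implicit. Unset Printing Implicit Defensive.


Section Ideals.
Variable R : idomainType.
Implicit Types (J P Q S : R -> Prop) (x y : R).

Lemma ideal_gen_ideal S : is_ideal (ideal_gen S).
Proof.
split.
- by exists [::]; rewrite big_nil.
- move=> x y [s [Hs ->]] [t [Ht ->]]; exists (s ++ t); split; last by rewrite big_cat.
  by move=> p; rewrite mem_cat => /orP[/Hs|/Ht].
- move=> r x [s [Hs ->]]; exists [seq (r * p.1, p.2) | p <- s]; split.
  + by move=> p /mapP[q /Hs ? ->].
  + by rewrite big_map mulr_sumr; apply: eq_bigr => p _; rewrite mulrA.
Qed.

Lemma ideal_gen_in S x : S x -> ideal_gen S x.
Proof.
move=> Sx; exists [:: (1, x)]; split; last by rewrite big_seq1 mul1r.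
by move=> p; rewrite inE => /eqP ->.
Qed.

Lemma ideal_gen_min S J : is_ideal J -> (forall x, S x -> J x) ->
  forall x, ideal_gen S x -> J x.
Proof.
move=> [J0 JD JM] HS x [s [Hs ->]]; elim: s Hs => [|p s IH] Hs; first by rewrite big_nil.
rewrite big_cons; apply: JD; first by apply: JM; apply: HS; apply: Hs; rewrite mem_head.
by apply: IH => q Hq; apply: Hs; rewrite in_cons Hq orbT.
Qed.

Lemma principal_ideal (c : R) : is_ideal (principal c).
Proof.
split; first by exists 0; rewrite mul0r.
- by move=> x y [a ->] [b ->]; exists (a + b); rewrite mulrDl.
- by move=> r x [a ->]; exists (r * a); rewrite mulrA.
Qed.

Lemma maximal_prime P : maximal_ideal P -> forall x y, P (x * y) -> P x \/ P y.
Proof.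
move=> [[P0 PD PM] P1 Pmax] x y Pxy.
case: (classic (P x)) => Px; [by left | right].
pose Q z := exists p r, P p /\ z = p + r * x.
have Qi : is_ideal Q.
  split; first by exists 0, 0; split => //; rewrite mul0r addr0.
  - move=> _ _ [p [r [Pp ->]]] [p' [r' [Pp' ->]]]; exists (p + p'), (r + r').
    by split; [exact: PD | rewrite mulrDl addrACA].
  - move=> s _ [p [r [Pp ->]]]; exists (s * p), (s * r).
    by split; [exact: PM | rewrite mulrDr mulrA].
case: (Pmax Q Qi).
- by move=> z Pz; exists z, 0; rewrite mul0r addr0.
- move=> [p [r [Pp E]]].
  have -> : y = y * (p + r * x) by rewrite -E mulr1.
  rewrite mulrDr; apply: PD; first exact: PM.
  by rewrite mulrCA [y * x]mulrC; exact: PM.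
- by move=> H; exfalso; apply: Px; apply: H; exists 0, 1; rewrite add0r mul1r.
Qed.

Lemma maximal_not_unit P x : maximal_ideal P -> P x -> x \isn't a GRing.unit.
Proof.
move=> [[P0 PD PM] P1 _] Px; apply/negP => ux; apply: P1.
by rewrite -(mulVr ux); apply: PM.
Qed.

Lemma exists_maximal : noetherian_dom R -> forall J, is_ideal J -> ~ J 1 ->
  exists P, maximal_ideal P /\ forall x, J x -> P x.
Proof.
move=> HN J HJ J1; apply: NNPP => H.
pose good J' := [/\ is_ideal J', ~ J' 1 & forall x, J x -> J' x].
have ex : forall J', exists Q, good J' ->
    good Q /\ (forall x, J' x -> Q x) /\ exists x, Q x /\ ~ J' x.
  move=> J'; case: (classic (good J')) => gJ'; last by exists J'.
  have [Q HQ] : exists Q, [/\ is_ideal Q, forall x, J' x -> Q x, ~ Q 1 &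
      exists x, Q x /\ ~ J' x].
    apply: NNPP => Hno; apply: H; exists J'; case: gJ' => iJ' nJ' sJ'.
    split=> //; split=> // Q iQ sQ; apply: NNPP => HQ; apply: Hno; exists Q.
    split=> //.
    + by move=> Q1; apply: HQ; left.
    + apply: NNPP => Hx; apply: HQ; right => x Qx; apply: NNPP => nx.
      by apply: Hx; exists x.
  case: HQ => iQ sQ nQ exQ; exists Q => _.
  have gQ : good Q by rewrite /good; case: gJ' => _ _ sJ'; split => // x /sJ'/sQ.
  by [].
pose next J' := proj1_sig (constructive_indefinite_description _ (ex J')).
have nextP J' : good J' -> good (next J') /\ (forall x, J' x -> next J' x) /\
    exists x, next J' x /\ ~ J' x.
  by rewrite /next; case: constructive_indefinite_description => Q HQ /=; exact: HQ.
pose ch n := iter n next J.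
have chg n : good (ch n).
  elim: n => [|n IH]; first by split.
  by case: (nextP _ IH).
have chmono n m : (n <= m)%N -> forall x, ch n x -> ch m x.
  move=> /subnK <-; elim: (m - n)%N => [|d IH] x Hx; first by rewrite add0n.
  by rewrite addSn /=; case: (nextP _ (chg (d + n)%N)) => _ [+ _]; apply; apply: IH.
pose U x := exists n, ch n x.
have iU : is_ideal U.
  split; first by exists 0%N; case: HJ.
  - move=> x y [n Hx] [m Hy]; exists (maxn n m); case: (chg (maxn n m)) => [[_ D _] _ _].
    by apply: D; [apply: (chmono n) | apply: (chmono m)]; rewrite ?leq_maxl ?leq_maxr.
  - by move=> r x [n Hx]; exists n; case: (chg n) => [[_ _ M] _ _]; apply: M.
have [s Hs] := HN U iU.
have [N HN'] : exists N, forall e, e \in s -> ch N e.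
  have : forall e, e \in s -> U e by move=> e es; apply/Hs/ideal_gen_in.
  elim: s {Hs} => [|e s IH] Hs'; first by exists 0%N.
  have [N1 H1] := IH (fun e' h => Hs' e' (@mem_behead _ (e :: s) _ h)).
  have [N2 H2] := Hs' e (mem_head _ _).
  exists (maxn N1 N2) => e'; rewrite in_cons => /orP[/eqP -> | /H1 h].
    by apply: (chmono N2); rewrite ?leq_maxr.
  by apply: (chmono N1); rewrite ?leq_maxl.
have UN x : U x -> ch N x.
  move=> /Hs; apply: ideal_gen_min; first by case: (chg N).
  exact: HN'.
case: (nextP _ (chg N)) => _ [_ [x [Hx nx]]]; apply: nx; apply: UN.
by exists N.+1.
Qed.

End Ideals.


Lemma disjP (T : finType) (A B : {set T}) :
  [disjoint A & B] <-> (forall x, x \in A -> x \in B -> False).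
Proof.
rewrite -setI_eq0; split.
  move/eqP => H x xa xb; have: x \in A :&: B by rewrite inE xa xb.
  by rewrite H inE.
move=> H; apply/eqP/setP => x; rewrite !inE; apply/negP => /andP[]; exact: H.
Qed.

Section Poly.
Variable R : idomainType.
Local Notation K := {fraction R}.
Local Notation tf := (@tofrac R).
Local Notation emb := (map_poly (@tofrac R)).
Variable I : finType.
Variable f : I -> {poly R}.
Hypothesis firr : forall i, irreducible_poly (emb (f i)).

Definition PS (S : {set I}) : {poly R} := \prod_(i in S) f i.
Definition PK (S : {set I}) : {poly K} := emb (PS S).

Lemma PKE S : PK S = \prod_(i in S) emb (f i).
Proof. by rewrite /PK /PS rmorph_prod. Qed.

Lemma emb_eval (p : {poly R}) a : (emb p).[tf a] = tf p.[a].
Proof. exact: horner_map. Qed.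

Lemma PK_eval S a : (PK S).[tf a] = tf (PS S).[a].
Proof. exact: emb_eval. Qed.

Lemma PS_eval S a : (PS S).[a] = \prod_(i in S) (f i).[a].
Proof. by rewrite /PS horner_prod. Qed.

Lemma femb_neq0 i : emb (f i) != 0.
Proof. exact: irredp_neq0. Qed.

Lemma PK_neq0 S : PK S != 0.
Proof. by rewrite PKE; apply/prodf_neq0 => i _; exact: femb_neq0. Qed.

Lemma PK0 : PK set0 = 1.
Proof. by rewrite PKE big_set0. Qed.

Lemma PK1 j : PK [set j] = emb (f j).
Proof. by rewrite PKE big_set1. Qed.

Lemma PKD1 (S : {set I}) j : j \in S -> PK S = emb (f j) * PK (S :\ j).
Proof. by move=> jS; rewrite !PKE (big_setD1 _ jS). Qed.

Lemma PKsplit (S T : {set I}) : S \subset T -> PK T = PK S * PK (T :\: S).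
Proof.
by move=> sST; rewrite !PKE [in LHS](big_setID S) (setIidPr sST).
Qed.

Lemma PK_size (S : {set I}) : S != set0 -> (1 < size (PK S))%N.
Proof.
case/set0Pn => j jS; rewrite (PKD1 jS) size_mul ?femb_neq0 ?PK_neq0 //.
have := (firr j).1; have := PK_neq0 (S :\ j); rewrite -size_poly_gt0.
by case: (size (PK _)) => // n _ h; rewrite addnS /=; apply: (leq_trans h); rewrite leq_addr.
Qed.

Lemma irr_dvd_mul (p g1 g2 : {poly K}) : irreducible_poly p ->
  p %| g1 * g2 -> (p %| g1) \/ (p %| g2).
Proof.
move=> irp H; case: (boolP (p %| g1)) => h; [by left | right].
have cop : coprimep p g1.
  rewrite /coprimep; apply/negPn/negP => hs.
  have := irp _ hs (dvdp_gcdl p g1) => /andP[_ pd].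
  by move: h; rewrite (dvdp_trans pd (dvdp_gcdr _ _)).
by rewrite -(Gauss_dvdpr _ cop).
Qed.

Lemma PKU1 (S : {set I}) j : j \notin S -> PK (j |: S) = emb (f j) * PK S.
Proof. by move=> jS; rewrite !PKE big_setU1. Qed.

Lemma UF n : forall (T : {set I}) (g1 g2 : {poly K}) (a : K), #|T| = n -> a != 0 ->
  g1 * g2 = a *: PK T ->
  exists (S : {set I}) (b1 b2 : K), [/\ S \subset T, g1 = b1 *: PK S, g2 = b2 *: PK (T :\: S) & b1 * b2 = a].
Proof.
elim: n => [|n IH] T g1 g2 a hT a0 E.
  have T0 := cards0_eq hT; subst T; rewrite PK0 alg_polyC in E.
  have : size (g1 * g2) == 1 by rewrite E size_polyC a0.
  rewrite size_mul_eq1 => /andP[/eqP s1 /eqP s2].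
  have e1 : g1 = (g1`_0)%:P by apply: size1_polyC; rewrite s1.
  have e2 : g2 = (g2`_0)%:P by apply: size1_polyC; rewrite s2.
  exists set0, g1`_0, g2`_0; split; rewrite ?sub0set ?setD0 ?PK0 ?alg_polyC //.
  by apply: polyC_inj; rewrite polyCM -e1 -e2 E.
have : (0 < #|T|)%N by rewrite hT.
case/card_gt0P => i iT; rewrite (PKD1 iT) in E.
have pd : emb (f i) %| g1 * g2 by rewrite E scalerAr dvdp_mulIl.
have hT' : #|T :\ i| = n by move: hT; rewrite (cardsD1 i) iT add1n => [[]].
have iS (S : {set I}) : S \subset T :\ i -> i \notin S.
  by move=> sS; apply/negP => /(subsetP sS); rewrite !inE eqxx.
have sT (S : {set I}) : S \subset T :\ i -> S \subset T.
  by move=> sS; apply/subsetP => x /(subsetP sS); rewrite !inE => /andP[].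
case: (irr_dvd_mul (firr i) pd) => [d1|d2].
  have E1 : g1 = (g1 %/ emb (f i)) * emb (f i) by rewrite divpK.
  have E' : (g1 %/ emb (f i)) * g2 = a *: PK (T :\ i).
    apply: (mulIf (femb_neq0 i)).
    by rewrite mulrAC -E1 E scalerAr mulrC.
  have [S [b1 [b2 [sS e1 e2 eb]]]] := IH _ _ _ _ hT' a0 E'.
  exists (i |: S), b1, b2; split => //.
  - apply/subsetP => x; rewrite !inE => /orP[/eqP->//|/(subsetP sS)].
    by rewrite !inE => /andP[].
  - by rewrite E1 e1 -scalerAl (PKU1 (iS _ sS)) mulrC.
  - by rewrite e2 setDDl.
have E2 : g2 = (g2 %/ emb (f i)) * emb (f i) by rewrite divpK.
have E' : g1 * (g2 %/ emb (f i)) = a *: PK (T :\ i).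
  apply: (mulIf (femb_neq0 i)).
  by rewrite -mulrA -E2 E scalerAr mulrC.
have [S [b1 [b2 [sS e1 e2 eb]]]] := IH _ _ _ _ hT' a0 E'.
exists S, b1, b2; split => //.
- exact: sT.
- have iTS : i \in T :\: S by rewrite inE iT (iS _ sS).
  rewrite E2 e2 -scalerAl (PKD1 iTS) mulrC; congr (_ *: (_ * _)).
  by rewrite setDDl setUC -setDDl.
Qed.

Lemma UFL s : forall (T : {set I}) (a : K), a != 0 -> \prod_(h <- s) h = a *: PK T ->
  exists (St : nat -> {set I}) (b : nat -> K),
   [/\ forall n, (n < size s)%N -> nth 0 s n = b n *: PK (St n),
       forall n m, (n < size s)%N -> (m < size s)%N -> n != m -> [disjoint St n & St m] &
       forall i, i \in T <-> exists n, (n < size s)%N /\ i \in St n].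
Proof.
elim: s => [|h s IH] T a a0 E.
  rewrite big_nil in E.
  exists (fun _ => set0), (fun _ => 0); split => // i; split => [iT|[n [//]]].
  have : T != set0 by apply/set0Pn; exists i.
  by move/PK_size; rewrite -(size_scale _ a0) -E size_poly1.
rewrite big_cons in E.
have [S [b1 [b2 [sS e1 e2 eb]]]] := UF (erefl _) a0 E.
have b20 : b2 != 0 by apply: contraNneq a0 => b2e; rewrite -eb b2e mulr0.
have [St [b [H1 H2 H3]]] := IH _ _ b20 e2.
have dS m : (m < size s)%N -> [disjoint S & St m].
  move=> hm; apply/disjP => x xS xm.
  have : x \in T :\: S by apply/H3; exists m.
  by rewrite inE xS.
exists (fun n => if n is n'.+1 then St n' else S), (fun n => if n is n'.+1 then b n' else b1).
split.
- by case => [|n] //= /H1.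
- case=> [|n] [|m] //= hn hm hnm.
  + exact: dS.
  + by rewrite disjoint_sym; apply: dS.
  + by apply: H2.
- move=> i; split.
  + move=> iT; case: (boolP (i \in S)) => iS; first by exists 0%N.
    have : i \in T :\: S by rewrite inE iS iT.
    by case/H3 => n [hn hi]; exists n.+1.
  + case=> [[|n] [hn hi]]; first exact: (subsetP sS).
    have : i \in T :\: S by apply/H3; exists n.
    by rewrite inE => /andP[].
Qed.

End Poly.


Section Main.
Variable R : idomainType.
Local Notation K := {fraction R}.
Local Notation tf := (@tofrac R).
Local Notation emb := (map_poly (@tofrac R)).
Variable I : finType.
Variable f : I -> {poly R}.
Variable c : R.
Variable Lam : (R -> Prop) -> {set I}.
Variable Lam0 : {set I}.
Variable k : I.
Hypothesis HN : noetherian_dom R.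
Hypothesis firr : forall i, irreducible_poly (emb (f i)).
Hypothesis c0 : c != 0.
Hypothesis cnu : c \isn't a GRing.unit.
Hypothesis Hfd : fixdiv_is (\prod_(i in I) f i) c.
Hypothesis Hind : forall P, maximal_ideal P -> P c -> forall i, i \in Lam P -> indispensable f P i.
Hypothesis HLam0 : forall i, i \in Lam0 <-> exists P, [/\ maximal_ideal P, P c & i \in Lam P].
Hypothesis Hk : forall P, maximal_ideal P -> P c -> k \in Lam P.

Local Notation PS := (PS f).
Local Notation PK := (PK f).
Implicit Types (S T : {set I}) (b : K) (g h : {poly K}).

Lemma fd_mul (p q : {poly R}) x : fixed_divisor (p * q) x -> fixed_divisor p x.
Proof.
apply: ideal_gen_min; first exact: ideal_gen_ideal.
move=> y [a ->]; rewrite hornerM mulrC.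
case: (ideal_gen_ideal (fun y => exists a, y = p.[a])) => _ _ M; apply: M.
by apply: ideal_gen_in; exists a.
Qed.

Lemma PS_I : PS setT = \prod_(i in I) f i.
Proof. by rewrite /PS; apply: eq_bigl => i; rewrite inE. Qed.

Lemma PSsplit (S T : {set I}) : S \subset T -> PS T = PS S * PS (T :\: S).
Proof. by move=> sST; rewrite /PS [in LHS](big_setID S) (setIidPr sST). Qed.

Lemma cin S : fixed_divisor (PS S) c.
Proof.
have : fixed_divisor (PS setT) c by rewrite PS_I; apply/Hfd; exists 1; rewrite mul1r.
by rewrite (@PSsplit S) ?subsetT //; apply: fd_mul.
Qed.

Lemma principal_sub r S : (forall a, principal r (PS S).[a]) ->
  forall x, fixed_divisor (PS S) x -> principal r x.
Proof. by move=> H; apply: ideal_gen_min; [exact: principal_ideal | move=> y [a ->]]. Qed.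

Lemma cP P : maximal_ideal P -> P c -> ~ P 1.
Proof. by case. Qed.

Lemma notP_PS P S z : maximal_ideal P -> (forall i, i \in S -> ~ P (f i).[z]) ->
  ~ P (PS S).[z].
Proof.
move=> HP H; rewrite PS_eval.
apply: (big_ind (fun x => ~ P x)); first by case: HP.
  by move=> x y nx ny /(maximal_prime HP) [].
exact: H.
Qed.

Lemma indisp_S P i S : maximal_ideal P -> P c -> i \in Lam P -> i \notin S ->
  exists z, P (f i).[z] /\ ~ P (PS S).[z].
Proof.
move=> HP Pc iL iS; have [z [Pz Hz]] := Hind HP Pc iL.
exists z; split => //; apply: notP_PS => // j jS; apply: Hz.
by apply: contraNneq iS => <-.
Qed.

Lemma intval_emb p : intval (emb p).
Proof. by move=> a; exists p.[a]; exact: emb_eval. Qed.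

Lemma intvalM g h : intval g -> intval h -> intval (g * h).
Proof.
move=> Hg Hh a; have [x ex] := Hg a; have [y ey] := Hh a.
by exists (x * y); rewrite hornerM ex ey rmorphM.
Qed.

Lemma intval_big (T : Type) (r : seq T) (P : pred T) (F : T -> {poly K}) :
  (forall x, P x -> intval (F x)) -> intval (\prod_(x <- r | P x) F x).
Proof.
move=> H; apply: big_ind => //; last exact: intvalM.
by move=> a; exists 1; rewrite hornerE rmorph1.
Qed.

Lemma intvalZ r p : intval p -> intval (tf r *: p).
Proof. by move=> Hp a; have [x ex] := Hp a; exists (r * x); rewrite hornerZ ex rmorphM. Qed.

Lemma intval_PK r S : intval (tf r *: PK S).
Proof. exact/intvalZ/intval_emb. Qed.

Lemma Int_unit_size h : Int_unit h -> size h = 1%N.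
Proof.
case=> _ [g [_ hg]]; have : size (h * g) == 1%N by rewrite hg size_poly1.
by rewrite size_mul_eq1 => /andP[/eqP].
Qed.

Lemma Int_unit_const b : (exists e, b = tf e) -> (exists e, b^-1 = tf e) -> b != 0 ->
  Int_unit b%:P.
Proof.
move=> [e be] [e' be'] b0; split.
  by move=> a; exists e; rewrite hornerC.
exists (b^-1)%:P; split; first by move=> a; exists e'; rewrite hornerC.
by rewrite -polyCM mulfV.
Qed.

Lemma Int_unit_tf r : r \is a GRing.unit -> Int_unit (tf r)%:P.
Proof.
move=> ur; apply: Int_unit_const; first by exists r.
  by exists r^-1; rewrite rmorphV.
by rewrite tofrac_eq0; apply: contraTneq ur => ->; rewrite unitr0.
Qed.

Lemma nonunit_PK b S : b != 0 -> S != set0 -> ~ Int_unit (b *: PK S).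
Proof.
move=> b0 S0 /Int_unit_size; rewrite size_scale // => h.
by have := PK_size firr S0; rewrite h.
Qed.

Lemma intval_eval p a : intval p -> exists e, p.[tf a] = tf e.
Proof. by move=> H; apply: H. Qed.

Lemma in_D (S2 : {set I}) (b2 : K) :
  (forall P, maximal_ideal P -> P c -> exists i, i \in Lam P /\ i \notin S2) ->
  intval (b2 *: PK S2) -> exists r, b2 = tf r.
Proof.
move=> Hex Hv.
pose Q x := exists e, tf x * b2 = tf e.
have Qi : is_ideal Q.
  split; first by exists 0; rewrite !rmorph0 mul0r.
  - by move=> x y [e ex] [e' ey]; exists (e + e'); rewrite !rmorphD mulrDl ex ey.
  - by move=> r x [e ex]; exists (r * e); rewrite !rmorphM -mulrA ex.
have Qv a : Q (PS S2).[a].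
  by have [e he] := Hv a; exists e; rewrite mulrC -he hornerZ PK_eval.
case: (classic (Q 1)) => [[e he]|Q1]; first by exists e; rewrite -he rmorph1 mul1r.
have [P [HP QP]] := exists_maximal HN Qi Q1.
have Pc : P c by apply: QP; apply: (ideal_gen_min Qi) (cin S2) => y [a ->].
have [i [iL iS]] := Hex P HP Pc.
have [z [_ nz]] := indisp_S HP Pc iL iS.
by exfalso; apply: nz; apply: QP; apply: Qv.
Qed.

Lemma vals_div (S1 : {set I}) (b1 : K) r : b1 * tf r = (tf c)^-1 -> intval (b1 *: PK S1) ->
  forall a, exists e, (PS S1).[a] = c * r * e.
Proof.
move=> eb Hv a; have [e he] := Hv a; exists e.
rewrite hornerZ PK_eval in he.
have tc0 : tf c != 0 by rewrite tofrac_eq0.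
have h1 : b1 * tf r * tf c = 1 by rewrite eb mulVf.
apply/eqP; rewrite -tofrac_eq; apply/eqP.
rewrite !tofracM -he.
by rewrite -[LHS]mul1r -h1; ring.
Qed.

Lemma keyB (S1 S2 : {set I}) (b1 b2 : K) : k \notin S2 -> [disjoint S1 & S2] -> b1 * b2 = (tf c)^-1 ->
  intval (b1 *: PK S1) -> intval (b2 *: PK S2) ->
  exists r, [/\ b2 = tf r, r \is a GRing.unit & [disjoint S2 & Lam0]].
Proof.
move=> kS dS eb H1 H2.
have [r br] : exists r, b2 = tf r.
  by apply: (in_D _ H2) => P HP Pc; exists k; split => //; exact: Hk.
subst b2; exists r; split => //.
- have hv : forall a, principal (c * r) (PS S1).[a].
    by move=> a; have [e he] := vals_div eb H1 a; exists e; rewrite he mulrC.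
  have := principal_sub hv (cin S1) => -[t ht].
  apply/unitrPr; exists t; apply: (mulfI c0); rewrite mulr1 [RHS]ht; ring.
- apply: (proj2 (disjP _ _)) => i iS2 iL0; have [P [HP Pc iL]] := (HLam0 i).1 iL0.
  have iS1 : i \notin S1 by apply/negP => iS1; move/disjP: dS => /(_ i iS1 iS2).
  have [z [_ nz]] := indisp_S HP Pc iL iS1.
  have [e he] := vals_div eb H1 z.
  apply: nz; rewrite he -mulrA; case: HP => [[_ _ M] _ _].
  by rewrite mulrC; apply: M.
Qed.


Lemma setUDK (A B : {set I}) : A \subset B -> A :|: (B :\: A) = B.
Proof.
move=> sAB; apply/setP => x; rewrite !inE.
by case: (boolP (x \in A)) => //= /(subsetP sAB) ->.
Qed.

Lemma not_principal1 : ~ principal c 1.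
Proof. by move=> [r hr]; move/negP: cnu; apply; apply/unitrPr; exists r; rewrite mulrC. Qed.

Lemma kLam0 : k \in Lam0.
Proof.
have [P [HP HcP]] := exists_maximal HN (principal_ideal c) not_principal1.
have Pc : P c by apply: HcP; exists 1; rewrite mul1r.
by apply/HLam0; exists P; split => //; apply: Hk.
Qed.

Lemma fixdiv_nonempty S : fixdiv_is (PS S) c -> S != set0.
Proof.
move=> H; apply/negP => /eqP S0; subst S; apply: not_principal1; apply/H.
rewrite /PS big_set0; apply: ideal_gen_in; exists 0; by rewrite hornerC.
Qed.

Lemma fixdiv_of S : (forall a, exists e, (PS S).[a] = e * c) -> fixdiv_is (PS S) c.
Proof.
move=> Hv x; split; first by apply: principal_sub => a; have [e he] := Hv a; exists e.
move=> [t ->]; case: (ideal_gen_ideal (fun y => exists a, y = (PS S).[a])) => _ _ M.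
exact/M/cin.
Qed.

Lemma intval_fixdiv S : fixdiv_is (PS S) c -> intval ((tf c)^-1 *: PK S).
Proof.
move=> H a; have : principal c (PS S).[a] by apply/H; apply: ideal_gen_in; exists a.
move=> [t ht]; exists t; rewrite hornerZ PK_eval ht tofracM mulrCA mulVf ?mulr1 //.
by rewrite tofrac_eq0.
Qed.

Lemma aux_split (J1 S1 S2 : {set I}) (b1 b2 : K) :
  [disjoint J1 & Lam0] ->
  (forall J' : {set I}, J' \proper J1 -> ~ fixdiv_is (PS (Lam0 :|: J')) c) ->
  k \notin S2 -> S1 :|: S2 = Lam0 :|: J1 -> [disjoint S1 & S2] -> b1 * b2 = (tf c)^-1 ->
  intval (b1 *: PK S1) -> intval (b2 *: PK S2) -> Int_unit (b2 *: PK S2).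
Proof.
move=> dJ minJ kS eU dS eb H1 H2.
have [r [br ur dL]] := keyB kS dS eb H1 H2; subst b2.
case: (eqVneq S2 set0) => [->|S20]; first by rewrite PK0 alg_polyC; exact: Int_unit_tf.
exfalso; apply: (minJ (J1 :\: S2)).
  apply/properP; split; first exact: subsetDl.
  case/set0Pn: S20 => x xS2; exists x; last by rewrite inE xS2.
  have : x \in S1 :|: S2 by rewrite inE xS2 orbT.
  rewrite eU inE => /orP[xL|//]; exfalso; by move/disjP: dL => /(_ x xS2 xL).
have eS1 : Lam0 :|: (J1 :\: S2) = S1.
  apply/setP => x; have := congr1 (fun A : {set I} => x \in A) eU; rewrite /= !inE.
  have h2 := (disjP _ _).1 dS x; have h3 := (disjP _ _).1 dL x.
  move: h2 h3; case: (x \in S1); case: (x \in S2); case: (x \in Lam0); case: (x \in J1) => h2 h3 /= heq;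
  try discriminate heq; try done; try (by case: (h2 erefl erefl)); by case: (h3 erefl erefl).
rewrite eS1. apply: fixdiv_of. move=> a. have [e he] := vals_div eb H1 a.
by exists (r * e); rewrite he; ring.
Qed.


Definition Fp := (tf c)^-1 *: emb (\prod_(i in I) f i).
Definition goodp (J1 : {set I}) :=
    [/\ [disjoint J1 & Lam0],
        fixdiv_is (\prod_(i in Lam0 :|: J1) f i) c &
        forall J' : {set I}, J' \proper J1 -> ~ fixdiv_is (\prod_(i in Lam0 :|: J') f i) c].
Definition factp (J1 : {set I}) : seq {poly {fraction R}} :=
    ((tf c)^-1 *: emb (\prod_(i in Lam0 :|: J1) f i))
      :: [seq emb (f j) | j <- enum (~: (Lam0 :|: J1))].

Lemma G_irred J1 : goodp J1 -> Int_irred ((tf c)^-1 *: PK (Lam0 :|: J1)).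
Proof.
case=> dJ fT minJ.
have c'0 : (tf c)^-1 != 0 by rewrite invr_eq0 tofrac_eq0.
split.
- exact: intval_fixdiv.
- by rewrite scaler_eq0 negb_or c'0 PK_neq0.
- by apply: nonunit_PK => //; apply: fixdiv_nonempty.
move=> g1 g2 Hg1 Hg2 E.
have [S [b1 [b2 [sS e1 e2 eb]]]] := UF firr (erefl _) c'0 (esym E).
have kT : k \in Lam0 :|: J1 by rewrite inE kLam0.
set T := Lam0 :|: J1 in sS e2 kT.
have dS : [disjoint S & T :\: S] by apply/disjP => x xS; rewrite inE xS.
case: (boolP (k \in S)) => kS.
  right; rewrite e2; apply: (@aux_split J1 S (T :\: S) b1 b2) => //.
  - by rewrite inE kS.
  - exact: setUDK.
  - by rewrite -e1.
  - by rewrite -e2.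
left; rewrite e1; apply: (@aux_split J1 (T :\: S) S b2 b1) => //.
- by rewrite setUC setUDK.
- by rewrite disjoint_sym.
- by rewrite mulrC.
- by rewrite -e2.
- by rewrite -e1.
Qed.

Lemma const_case j b1 b2 : j \notin Lam0 -> b1 * b2 = 1 ->
  intval (b1 *: PK set0) -> intval (b2 *: PK [set j]) -> Int_unit (b1 *: PK set0).
Proof.
move=> jL eb H1 H2; rewrite PK0 alg_polyC.
have b10 : b1 != 0 by apply: contraNneq (oner_neq0 K) => e; rewrite -eb e mul0r.
apply: Int_unit_const => //.
  have [e he] := H1 0; exists e; by rewrite -he PK0 hornerZ hornerE mulr1.
have -> : b1^-1 = b2 by rewrite -[b2]mul1r -(mulVf b10) -mulrA eb mulr1.
apply: (in_D _ H2) => P HP Pc; exists k; split; first exact: Hk.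
rewrite inE; apply/negP => /eqP kj; move/negP: jL; apply; rewrite -kj; apply/(HLam0 k).
by exists P; split => //; apply: Hk.
Qed.

Lemma fj_irred j : j \notin Lam0 -> Int_irred (emb (f j)).
Proof.
move=> jL; split.
- exact: intval_emb.
- exact: femb_neq0.
- by move/Int_unit_size => h; have := (firr j).1; rewrite h.
move=> g1 g2 Hg1 Hg2 E.
have E' : g1 * g2 = 1 *: PK [set j] by rewrite scale1r PK1 E.
have [S [b1 [b2 [sS e1 e2 eb]]]] := UF firr (erefl _) (oner_neq0 _) E'.
move: sS; rewrite subset1 => /orP[/eqP eS|/eqP eS]; subst S.
  right; rewrite setDv in e2; rewrite e2; apply: (@const_case j b2 b1) => //.
  - by rewrite mulrC.
  - by rewrite -e2.
  - by rewrite -e1.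
left; rewrite e1; apply: (@const_case j b1 b2) => //.
- by rewrite -e1.
- by rewrite setD0 in e2; rewrite -e2.
Qed.

Lemma part1 J1 : goodp J1 -> Int_factorization Fp (factp J1).
Proof.
move=> gJ; split.
  move=> h; rewrite inE => /orP[/eqP ->|/mapP [j]].
    by have := G_irred gJ; rewrite /PK /PS.
  rewrite mem_enum inE => jT ->; apply: fj_irred.
  by apply: contra jT; rewrite inE => ->.
rewrite big_cons big_map big_enum /= /Fp -PS_I.
have -> : (\prod_(i in Lam0 :|: J1) f i) = PS (Lam0 :|: J1) by [].
rewrite -/(PK _) -/(PK _) (@PKsplit _ _ _ (Lam0 :|: J1) setT) ?subsetT // setTD !PKE.
by rewrite scalerAl.
Qed.


Lemma bigPK N (St : nat -> {set I}) (Pr : pred 'I_N) :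
  (forall n m, (n < N)%N -> (m < N)%N -> n != m -> [disjoint St n & St m]) ->
  \prod_(o | Pr o) PK (St o) = PK (\bigcup_(o | Pr o) St o).
Proof.
move=> dS.
pose F' (o : 'I_N) := if Pr o then St o else set0.
have -> : \bigcup_(o | Pr o) St o = \bigcup_o F' o by rewrite big_mkcond.
have d0l (A : {set I}) : [disjoint set0 & A] by rewrite disjoints_subset sub0set.
have d0r (A : {set I}) : [disjoint A & set0] by rewrite disjoint_sym d0l.
have dF : forall i j : 'I_N, i != j -> [disjoint F' i & F' j].
  move=> i j hij; rewrite /F'; case: (Pr i); case: (Pr j) => //.
  exact: dS.
rewrite PKE (partition_disjoint_bigcup _ _ dF) [LHS]big_mkcond /=.
apply: eq_bigr => o _; rewrite /F'; case: (Pr o); first by rewrite PKE.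
by rewrite big_set0.
Qed.

Lemma part2 s : Int_factorization Fp s -> exists J1, goodp J1 /\ ess_same s (factp J1).
Proof.
case=> Hirr Hprod.
have c'0 : (tf c)^-1 != 0 by rewrite invr_eq0 tofrac_eq0.
have E : \prod_(h <- s) h = (tf c)^-1 *: PK setT by rewrite Hprod /Fp /PK PS_I.
have [St [b [H1 H2 H3]]] := UFL firr c'0 E.
have E' : \prod_(o < size s) nth 0 s o = (tf c)^-1 *: PK setT by rewrite -E (big_nth 0) big_mkord.
move: H1 H2 H3 E'; set N := size s => H1 H2 H3 E'.
have [n0 [hn0 kn0]] := (H3 k).1 (in_setT k).
pose o0 := Ordinal hn0.
have hirr n : (n < N)%N -> Int_irred (nth 0 s n) by move=> hn; apply: Hirr; apply: mem_nth.
have hval n : (n < N)%N -> intval (nth 0 s n) by move=> /hirr [].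
have bigform (Pr : pred 'I_N) : \prod_(o | Pr o) nth 0 s o =
    (\prod_(o | Pr o) b o) *: PK (\bigcup_(o | Pr o) St o).
  rewrite -(bigPK Pr H2) -scaler_prod; apply: eq_bigr => o _; exact: H1.
have cover : \bigcup_(o < N) St o = setT.
  apply/setP => x; rewrite inE; apply/bigcupP; have [n [hn xn]] := (H3 x).1 (in_setT x).
  by exists (Ordinal hn).
have prodb : \prod_(o < N) b o = (tf c)^-1.
  have := bigform (fun _ => true); rewrite /= E' cover => /eqP.
  rewrite eq_sym -subr_eq0 -scalerBl scaler_eq0 (negPf (PK_neq0 firr setT)) orbF subr_eq0.
  by move/eqP.
have key (o : 'I_N) : o != o0 ->
    exists r, [/\ b o = tf r, r \is a GRing.unit & [disjoint St o & Lam0]].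
  move=> oo0.
  apply: (@keyB (\bigcup_(m | m != o) St m) (St o) (\prod_(m | m != o) b m) (b o)).
  - apply/negP => ko; have := H2 o n0 (ltn_ord o) hn0 oo0.
    by move/disjP => /(_ k ko kn0).
  - apply/disjP => x /bigcupP [m mo xm] xo.
    by move/disjP: (H2 m o (ltn_ord m) (ltn_ord o) mo) => /(_ x xm xo).
  - by rewrite -prodb [RHS](bigD1 o) //= mulrC.
  - by rewrite -bigform; apply: intval_big => m _; apply: hval.
  - by rewrite -H1 //; apply: hval.
pose jf n := odflt k [pick x in St n].
have single (o : 'I_N) : o != o0 -> St o = [set jf o].
  move=> oo0; have [r [br ur dL]] := key o oo0.
  have hI := hirr o (ltn_ord o); have hf := H1 o (ltn_ord o); rewrite br in hf.
  have r0 : tf r != 0.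
    by rewrite tofrac_eq0; apply: contraTneq ur => ->; rewrite unitr0.
  case: (eqVneq (St o) set0) => [S0|S0].
    exfalso; case: hI => _ _ nu _; apply: nu; rewrite hf S0 PK0 alg_polyC.
    exact: Int_unit_tf.
  rewrite /jf; case: pickP => [j jS|]; last first.
    by move=> h; case/set0Pn: S0 => x; rewrite h.
  rewrite /=.
  case: (eqVneq (St o :\ j) set0) => [D0|D0].
    apply/eqP; rewrite eqEsubset; apply/andP; split; first by rewrite -setD_eq0 D0.
    by rewrite sub1set.
  exfalso; case: hI => _ _ _ irr.
  have := irr (tf r *: PK [set j]) (PK (St o :\ j)) (intval_PK _ _) (intval_emb _).
  case.
  - by rewrite hf (PKD1 f jS) PK1 scalerAl.
  - apply: nonunit_PK => //; apply/set0Pn; exists j; by rewrite inE.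
  - by rewrite -[PK _]scale1r; apply: nonunit_PK => //; exact: oner_neq0.
have jfin (o : 'I_N) : o != o0 -> jf o \in St o.
  by move=> h; rewrite [in X in _ \in X](single o h) set11.
have singleN n (hn : (n < N)%N) : n != n0 -> St n = [set jf n].
  by move=> h; exact: (single (Ordinal hn) h).
have jfinN n (hn : (n < N)%N) : n != n0 -> jf n \in St n.
  by move=> h; exact: (jfin (Ordinal hn) h).
have keyN n (hn : (n < N)%N) : n != n0 -> exists r, b n = tf r /\ r \is a GRing.unit.
  by move=> h; have [r [br ur _]] := key (Ordinal hn) h; exists r.
have [A0 [eA uA]] : exists a, \prod_(o | o != o0) b o = tf a /\ a \is a GRing.unit.
  apply: (big_ind (fun x => exists a, x = tf a /\ a \is a GRing.unit)).
  - by exists 1; rewrite rmorph1 unitr1.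
  - by move=> x y [a [-> ua]] [a' [-> ua']]; exists (a * a'); rewrite tofracM unitrM ua ua'.
  - by move=> o oo0; have [r [br ur _]] := key o oo0; exists r.
have eb0 : b n0 * tf A0 = (tf c)^-1 by rewrite -eA -prodb [RHS](bigD1 o0).
have tA0 : tf A0 != 0.
  by rewrite tofrac_eq0; apply: contraTneq uA => ->; rewrite unitr0.
have tAV : (tf A0)^-1 = tf A0^-1 by rewrite rmorphV.
have ebn0 : b n0 = (tf A0)^-1 * (tf c)^-1.
  by apply: (mulIf tA0); rewrite eb0 mulrC mulrA mulfV // mul1r.
have Lsub : Lam0 \subset St n0.
  apply/subsetP => x xL; have [n [hn xn]] := (H3 x).1 (in_setT x).
  case: (eqVneq n n0) => [<-//|nn0].
  have [r [_ _ dL]] := key (Ordinal hn) nn0.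
  by move/disjP: dL => /(_ x xn xL).
have eT : Lam0 :|: (St n0 :\: Lam0) = St n0 := setUDK Lsub.
have hv0 : intval (b n0 *: PK (St n0)) by rewrite -(H1 n0 hn0); apply: hval.
have fx0 : fixdiv_is (PS (St n0)) c.
  apply: fixdiv_of => a; have [e he] := vals_div eb0 hv0 a.
  by exists (A0 * e); rewrite he; ring.
exists (St n0 :\: Lam0); split.
  split.
  - by apply/disjP => x; rewrite inE => /andP[xL _] xL'; rewrite xL' in xL.
  - by change (fixdiv_is (PS (Lam0 :|: (St n0 :\: Lam0))) c); rewrite eT.
  - move=> J' pJ' fJ'; change (fixdiv_is (PS (Lam0 :|: J')) c) in fJ'.
    set T' := Lam0 :|: J' in fJ'.
    have sT' : T' \subset St n0.
      apply/subsetP => x; rewrite inE => /orP[/(subsetP Lsub)//|/(subsetP (proper_sub pJ'))].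
      by rewrite inE => /andP[].
    have D0 : St n0 :\: T' != set0.
      case/properP: pJ' => _ [x xJ1 xJ']; apply/set0Pn; exists x.
      move: xJ1; rewrite !inE => /andP[xL xS]; by rewrite xS (negPf xL) (negPf xJ').
    have [_ _ _ irr] := hirr n0 hn0.
    have e0 : nth 0 s n0 = ((tf c)^-1 *: PK T') * ((tf A0)^-1 *: PK (St n0 :\: T')).
      rewrite (H1 n0 hn0) (PKsplit f sT') -scalerAl -scalerAr scalerA ebn0 mulrC.
      by [].
    have hg2 : intval ((tf A0)^-1 *: PK (St n0 :\: T')) by rewrite tAV; exact: intval_PK.
    have := irr _ _ (intval_fixdiv fJ') hg2 e0.
    case => nu.
    + exact: (nonunit_PK c'0 (fixdiv_nonempty fJ') nu).
    + by apply: (nonunit_PK _ D0 nu); rewrite invr_eq0.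
pose G := (tf c)^-1 *: emb (\prod_(i in Lam0 :|: (St n0 :\: Lam0)) f i).
pose sig n := if n == n0 then None else Some (jf n).
pose phi (o : option I) := if o is Some j then emb (f j) else G.
pose t' := map (phi \o sig) (iota 0 N).
have Hperm : perm_eq (factp (St n0 :\: Lam0)) t'.
  have -> : factp (St n0 :\: Lam0) = map phi (None :: map Some (enum (~: St n0))).
    by rewrite /factp /= -map_comp /phi /G eT.
  rewrite /t' map_comp; apply: perm_map; apply: uniq_perm.
  - rewrite /= (map_inj_uniq (@Some_inj _)) enum_uniq andbT.
    by apply/mapP => [[x _]].
  - rewrite map_inj_in_uniq ?iota_uniq // => n m; rewrite !mem_iota !add0n.
    move=> /andP[_ hn] /andP[_ hm]; rewrite /sig.
    case: (eqVneq n n0) => [->|nn0]; case: (eqVneq m n0) => [->|mn0] //.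
    move=> [e]; apply/eqP; apply/negPn/negP => nm.
    move/disjP: (H2 n m hn hm nm) => /(_ (jf n)); apply; first exact: jfinN.
    by rewrite e; exact: jfinN.
  - move=> [j|].
      rewrite in_cons /= (mem_map (@Some_inj _)) mem_enum inE.
      apply/idP/idP.
        move=> jn; have [n [hn jn']] := (H3 j).1 (in_setT j).
        have nn0 : n != n0 by apply: contraNneq jn => <-.
        apply/mapP; exists n; first by rewrite mem_iota add0n hn.
        rewrite /sig (negPf nn0); move: jn'; rewrite (singleN n hn nn0).
        by move/set1P ->.
      case/mapP => n; rewrite mem_iota add0n => hn; rewrite /sig.
      case: (eqVneq n n0) => // nn0 [ej]; apply/negP => jn0.
      move/disjP: (H2 n n0 hn hn0 nn0) => /(_ (jf n)); apply; first exact: jfinN.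
      by rewrite -ej.
    rewrite in_cons eqxx /=; apply/esym/mapP; exists n0.
      by rewrite mem_iota add0n hn0.
    by rewrite /sig eqxx.
split.
  by rewrite (perm_size Hperm) /t' size_map size_iota.
exists t'; split => // n hn.
rewrite /t' (nth_map 0%N) ?size_iota // nth_iota // add0n /= /sig.
case: (eqVneq n n0) => [->|nn0] /=.
  exists ((tf A0)^-1)%:P; split.
    by rewrite tAV; apply: Int_unit_tf; rewrite unitrV.
  rewrite (H1 n0 hn0) mul_polyC scalerA /G.
  change (b n0 *: PK (St n0) = ((tf A0)^-1 * (tf c)^-1) *: PK (Lam0 :|: (St n0 :\: Lam0))).
  by rewrite eT ebn0.
have [r [br ur]] := keyN n hn nn0.
exists (tf r)%:P; split; first exact: Int_unit_tf.
by rewrite (H1 n hn) (singleN n hn nn0) PK1 br mul_polyC.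
Qed.

End Main.

Unset Implicit Arguments. Set Strict Implicit.

Theorem lemma3p7 (R : idomainType) (I : finType) (f : I -> {poly R}) (c : R)
  (Lam : (R -> Prop) -> {set I}) (Lam0 : {set I}) :
  dedekind_domain R ->
  (0 < #|I|)%N ->
  (forall i, irreducible_poly (map_poly (@tofrac R) (f i))) ->
  c != 0 -> c \isn't a GRing.unit ->
  fixdiv_is (\prod_(i in I) f i) c ->
  (forall P, maximal_ideal P -> P c -> forall i, i \in Lam P -> indispensable f P i) ->
  (forall i, i \in Lam0 <-> exists P, [/\ maximal_ideal P, P c & i \in Lam P]) ->
  (exists i, forall P, maximal_ideal P -> P c -> i \in Lam P) ->
  let F := (@tofrac R c)^-1 *: map_poly (@tofrac R) (\prod_(i in I) f i) in
  let good (J1 : {set I}) :=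
    [/\ [disjoint J1 & Lam0],
        fixdiv_is (\prod_(i in Lam0 :|: J1) f i) c &
        forall J' : {set I}, J' \proper J1 -> ~ fixdiv_is (\prod_(i in Lam0 :|: J') f i) c] in
  let fact (J1 : {set I}) : seq {poly {fraction R}} :=
    ((@tofrac R c)^-1 *: map_poly (@tofrac R) (\prod_(i in Lam0 :|: J1) f i))
      :: [seq map_poly (@tofrac R) (f j) | j <- enum (~: (Lam0 :|: J1))] in
  (forall J1, good J1 -> Int_factorization F (fact J1)) /\
  (forall s, Int_factorization F s -> exists J1, good J1 /\ ess_same s (fact J1)).
Proof.
move=> [HN _ _] _ firr c0 cnu Hfd Hind HLam0 [k Hk] F good fact.
split.
- move=> J1 gJ.
  exact: (@part1 R I f c Lam Lam0 k HN firr c0 cnu Hfd Hind HLam0 Hk J1 gJ).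
- move=> s Hs.
  exact: (@part2 R I f c Lam Lam0 k HN firr c0 cnu Hfd Hind HLam0 Hk s Hs).
Qed.
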